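(* Let $(I,\leq)$ be a finite poset containing two incomparable elements. Then the collection of nonzero functors in $\mathcal C=\{\mathrm{coker}(G\subseteq F)\mid G\subseteq F\subseteq K_I\}$ is not independent, and the functor $\mathcal Q\colon\Omega^{\mathrm{op}}\to\mathrm{Fun}(I,\mathrm{vect}_K)$ is not thin.
   Context: $K$ is a field, $\mathrm{vect}_K$ finite-dimensional $K$-vector spaces, $K_I$ the constant functor with value $K$; subfunctors of $K_I$ are identified with their supports $\mathrm{supp}(F)=\{v\mid F(v)\neq0\}$, which are upsets. $\mathrm{Sub}(I)$ is the set of subfunctors of $K_I$ ordered by $F\preccurlyeq G$ iff $\mathrm{supp}(F)\supseteq\mathrm{supp}(G)$. $\Omega:=\{(F,G)\in\mathrm{Sub}(I)^2\mid F\preccurlyeq G\}$ with the product order, and $\mathcal Q\colon\Omega^{\mathrm{op}}\to\mathrm{Fun}(I,\mathrm{vect}_K)$ sends $(F,G)$ to $\mathrm{coker}(G\subseteq F)$, and a relation $(F,G)\preccurlyeq(F',G')$ to the natural transformation $\mathrm{coker}(G'\subseteq F')\to\mathrm{coker}(G\subseteq F)$ induced by the inclusions $F'\subseteq F$, $G'\subseteq G$. A collection $\mathcal C'$ of objects is independent if for every finite direct sum $X$ of elements of $\mathcal C'$ there is a unique finitely supported $\beta\colon\mathcal C'\to\mathbb N$ with $X\cong\bigoplus_{A\in\mathcal C'}A^{\beta(A)}$. For a finite poset $J$ and $\mathcal P\colon J^{\mathrm{op}}\to\mathrm{Fun}(I,\mathrm{vect}_K)$: $K(a,-)\colon J\to\mathrm{vect}_K$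 is the free functor ($K$ at $b\succcurlyeq a$, else $0$); $\mathcal RM=\mathrm{Nat}_I(\mathcal P(-),M)$ with left adjoint $\mathcal L$ (so $\mathcal LK(a,-)\cong\mathcal P(a)$); $\eta_a\colon K(a,-)\to\mathcal R\mathcal LK(a,-)$ is the unit; $\mathcal P$ is thin if every $\eta_a$ is pointwise surjective. *)

(* Defs.v *)
From HB Require Import structures.
From mathcomp Require Import all_boot all_order all_algebra.
From Stdlib Require List.
Set Implicit Arguments. Unset Strict Implicit. Unset Printing Implicit Defensive.
Import Order.TTheory GRing.Theory.
Local Open Scope ring_scope.

(* Functors I -> vect_K for a finite poset I, encoded concretely:
   a dimension at each point and, for u <= v, a matrix acting on row
   vectors (x in V(u) is sent to x *m rmap u v in V(v)). *)
Section Reps.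
Variables (K : fieldType) (d : Order.disp_t) (I : finPOrderType d).

Record rep := Rep {
  rdim : I -> nat;
  rmap : forall u v : I, 'M[K]_(rdim u, rdim v)
}.

(* functoriality (maps between incomparable points are normalized to 0) *)
Definition is_rep (X : rep) : Prop :=
  (forall u, rmap X u u = 1%:M) /\
  (forall u v w, (u <= v)%O -> (v <= w)%O -> rmap X u v *m rmap X v w = rmap X u w) /\
  (forall u v, ~~ (u <= v)%O -> rmap X u v = 0).

Definition natT (M N : rep) := forall u : I, 'M[K]_(rdim M u, rdim N u).

Definition is_nat (M N : rep) (f : natT M N) : Prop :=
  forall u v, (u <= v)%O -> rmap M u v *m f v = f u *m rmap N u v.

Definition iso (M N : rep) : Prop :=
  exists (f : natT M N) (g : natT N M), is_nat f /\ is_nat g /\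
    forall u, f u *m g u = 1%:M /\ g u *m f u = 1%:M.

Definition nonzero_rep (X : rep) : Prop := exists v, rdim X v != 0%N.

Definition zrep : rep := @Rep (fun _ => 0%N) (fun _ _ => 0).

Definition dsum (M N : rep) : rep :=
  @Rep (fun u => (rdim M u + rdim N u)%N)
       (fun u v => block_mx (rmap M u v) 0 0 (rmap N u v)).

Definition sumseq (s : seq rep) : rep := foldr dsum zrep s.

(* X is isomorphic to the direct sum over A in C of A^(beta A), beta being
   finitely supported on C *)
Definition decomp (C : rep -> Prop) (X : rep) (beta : rep -> nat) : Prop :=
  (forall A, beta A <> 0%N -> C A) /\
  exists l : seq rep, List.NoDup l /\ (forall A, beta A <> 0%N -> List.In A l) /\
    iso X (sumseq (flatten (map (fun A => nseq (beta A) A) l))).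

Definition independent (C : rep -> Prop) : Prop :=
  forall s : seq rep, (forall A, List.In A s -> C A) ->
    exists beta, decomp C (sumseq s) beta /\
      forall beta', decomp C (sumseq s) beta' -> forall A, C A -> beta A = beta' A.

(* subfunctors of K_I, identified with their supports (upsets) *)
Definition upset (S : {set I}) : bool :=
  [forall x, forall y, (x \in S) && (x <= y)%O ==> (y \in S)].

(* coker(G <= F): K on supp F \ supp G, identity maps there, 0 elsewhere *)
Definition coker (F G : {set I}) : rep :=
  @Rep (fun v => nat_of_bool ((v \in F) && (v \notin G)))
       (fun u v => \matrix_(i, j) ((u <= v)%O)%:R).

Definition Ccoll (X : rep) : Prop :=
  nonzero_rep X /\
  exists F G : {set I}, upset F /\ upset G /\ G \subset F /\ X = coker F G.

(* Omega = {(F,G) in Sub(I)^2 | F <= G}, i.e. supp G \subset supp F *)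
Definition Omega := {p : {set I} * {set I} | [&& upset p.1, upset p.2 & p.2 \subset p.1]}.

(* product order, with F <= F' iff supp F' \subset supp F *)
Definition Omega_le : rel Omega :=
  fun a b => ((val b).1 \subset (val a).1) && ((val b).2 \subset (val a).2).

Definition Qobj (a : Omega) : rep := coker (val a).1 (val a).2.

(* Q(a <= b) : coker(b) -> coker(a), induced by the inclusions *)
Definition Qmor (a b : Omega) : natT (Qobj b) (Qobj a) := fun u => const_mx 1.

End Reps.

(* Thinness of P : J^op -> Fun(I, vect_K), unfolded: R L K(a,-) (b) =
   Nat(P b, P a) and eta_a at b sends 1 to P(a <= b) (when a <= b; the
   source is 0 otherwise).  Pointwise surjectivity of every eta_a thus says: *)
Definition thin (K : fieldType) (d : Order.disp_t) (I : finPOrderType d)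
    (J : finType) (leJ : rel J) (Pobj : J -> rep K I)
    (Pmor : forall a b : J, natT (Pobj b) (Pobj a)) : Prop :=
  forall (a b : J) (f : natT (Pobj b) (Pobj a)), is_nat f ->
    if leJ a b then exists c : K, forall u, f u = c *: Pmor a b u
    else forall u, f u = 0.

(* Main.v *)
Require Import Defs.
From HB Require Import structures.
From mathcomp Require Import all_boot all_order all_algebra zify.
Set Implicit Arguments. Unset Strict Implicit. Unset Printing Implicit Defensive.
Import Order.Theory GRing.Theory.
Local Open Scope ring_scope.

Section H.
Variables (K : fieldType) (d : Order.disp_t) (I : finPOrderType d).

Lemma iso_ent (M N : rep K I) (r : I -> I -> K) :
  (forall u, rdim M u = rdim N u) -> (forall u, (rdim M u <= 1)%N) ->
  (forall u v i j, rmap M u v i j = r u v) -> (forall u v i j, rmap N u v i j = r u v) ->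
  iso M N.
Proof.
move=> eqd le1 eM eN.
exists (fun u => const_mx 1), (fun u => const_mx 1).
split; [|split].
- move=> u v _; apply/matrixP => i j; rewrite !mxE.
  under eq_bigr do rewrite eM mxE mulr1.
  under [RHS]eq_bigr do rewrite eN mxE mul1r.
  rewrite !sumr_const !card_ord.
  have h1 : rdim M v = 1%N by have:= ltn_ord j; have := le1 v; have := eqd v; have := eqd u; lia.
  have h2 : rdim N u = 1%N by have:= ltn_ord i; have := le1 u; have := eqd v; have := eqd u; lia.
  by rewrite h1 h2.
- move=> u v _; apply/matrixP => i j; rewrite !mxE.
  under eq_bigr do rewrite eN mxE mulr1.
  under [RHS]eq_bigr do rewrite eM mxE mul1r.
  rewrite !sumr_const !card_ord.
  have h1 : rdim N v = 1%N by have:= ltn_ord j; have := le1 v; have := eqd v; have := eqd u; lia.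
  have h2 : rdim M u = 1%N by have:= ltn_ord i; have := le1 u; have := eqd u; lia.
  by rewrite h1 h2.
- move=> u; split; apply/matrixP => i j; rewrite !mxE;
  under eq_bigr do rewrite !mxE mul1r;
  rewrite sumr_const card_ord.
  + have h2 : rdim N u = 1%N by have:= ltn_ord i; have := le1 u; have := eqd u; lia.
    have e : i = j by apply: ord_inj; have:= ltn_ord i; have:= ltn_ord j; have := le1 u; lia.
    by rewrite h2 e eqxx.
  + have h2 : rdim M u = 1%N by have:= ltn_ord i; have := le1 u; have := eqd u; lia.
    have e : i = j by apply: ord_inj; have:= ltn_ord i; have:= ltn_ord j; have := le1 u; have := eqd u; lia.
    by rewrite h2 e eqxx.
Qed.

Lemma dsum_ent (M N : rep K I) (r : I -> I -> K) :
  (forall u v i j, rmap M u v i j = r u v) -> (forall u v i j, rmap N u v i j = r u v) ->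
  (forall u v, rdim M u != 0%N -> rdim N v != 0%N -> r u v = 0) ->
  (forall u v, rdim N u != 0%N -> rdim M v != 0%N -> r u v = 0) ->
  forall u v i j, rmap (dsum M N) u v i j = r u v.
Proof.
move=> eM eN h1 h2 u v i j /=.
rewrite -(splitK i) -(splitK j).
case: (split i) => i'; case: (split j) => j' /=.
- by rewrite block_mxEul.
- rewrite block_mxEur mxE; symmetry; apply: h1; [have := ltn_ord i' | have := ltn_ord j']; lia.
- rewrite block_mxEdl mxE; symmetry; apply: h2; [have := ltn_ord i' | have := ltn_ord j']; lia.
- by rewrite block_mxEdr.
Qed.

Lemma zrep_ent (r : I -> I -> K) u v i j : rmap (zrep K I) u v i j = r u v.
Proof. by case: i. Qed.

Lemma coker_ent (F G : {set I}) u v i j :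
  rmap (coker K F G) u v i j = ((u <= v)%O)%:R.
Proof. by rewrite /= mxE. Qed.
End H.
From Stdlib Require Import ClassicalEpsilon.
Section M.
Variables (K : fieldType) (d : Order.disp_t) (I : finPOrderType d).

Definition Fxy (x y : I) : {set I} := [set z | (x <= z)%O || (y <= z)%O].
Definition Gxy (x y : I) : {set I} :=
  [set z | ((x <= z)%O || (y <= z)%O) && (z != x) && (z != y)].

Lemma memL x y z : (z \in Fxy x y) && (z \notin Gxy x y) = (z == x) || (z == y).
Proof.
rewrite !inE; case: (z =P x) => [->|_]; first by rewrite lexx.
case: (z =P y) => [->|_]; first by rewrite lexx orbT.
by rewrite /= andbT; case: (_ || _).
Qed.

Lemma upF x y : upset (Fxy x y).
Proof.
apply/forallP => a; apply/forallP => b; apply/implyP => /andP[].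
rewrite !inE => /orP[] h ab; [rewrite (le_trans h ab) // | rewrite (le_trans h ab) orbT //].
Qed.

Lemma upG x y : ((x <= y)%O -> x = y) -> ((y <= x)%O -> y = x) -> upset (Gxy x y).
Proof.
move=> hxy hyx.
apply/forallP => a; apply/forallP => b; apply/implyP => /andP[].
rewrite !inE => /andP[/andP[hF ax] ay] ab.
have hF' : (x <= b)%O || (y <= b)%O.
  by case/orP: hF => h; [rewrite (le_trans h ab) | rewrite (le_trans h ab) orbT].
rewrite hF' /=; apply/andP; split; apply/eqP => eb; subst b.
- case/orP: hF => h.
  + by move/eqP: ax; apply; apply: le_anti; rewrite ab h.
  + have e := hyx (le_trans h ab); subst y.
    by move/eqP: ax; apply; apply: le_anti; rewrite ab h.
- case/orP: hF => h.
  + have e := hxy (le_trans h ab); subst y.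
    by move/eqP: ax; apply; apply: le_anti; rewrite ab h.
  + by move/eqP: ay; apply; apply: le_anti; rewrite ab h.
Qed.

Lemma subGF x y : Gxy x y \subset Fxy x y.
Proof. by apply/subsetP => z; rewrite !inE => /andP[/andP[]]. Qed.

Definition X x y := coker K (Fxy x y) (Gxy x y).

Lemma rdimX x y u : rdim (X x y) u = nat_of_bool ((u == x) || (u == y)).
Proof. by rewrite /= memL. Qed.

Lemma CX x y : ((x <= y)%O -> x = y) -> ((y <= x)%O -> y = x) -> Ccoll (X x y).
Proof.
move=> hxy hyx; split.
  by exists x; rewrite rdimX eqxx.
exists (Fxy x y), (Gxy x y); split; first exact: upF.
by split; [exact: upG | split; [exact: subGF|]].
Qed.

Lemma Xent x y u v i j : rmap (X x y) u v i j = ((u <= v)%O)%:R.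
Proof. exact: coker_ent. Qed.

Lemma Xneq x y x' y' z : ((z == x) || (z == y)) != ((z == x') || (z == y')) -> X x y <> X x' y'.
Proof.
move=> h /(f_equal (fun R => rdim R z)); rewrite !rdimX.
by move: h; case: (_ || _); case: (_ || _).
Qed.

End M.

Theorem proposition6p4 (K : fieldType) (d : Order.disp_t) (I : finPOrderType d) :
  (exists x y : I, ~~ (x >=< y)%O) ->
  ~ independent (@Ccoll K d I) /\ ~ @thin K d I (Omega I) (@Omega_le d I) (@Qobj K d I) (@Qmor K d I).
Proof.
move=> [x [y nc]].
have nxy : ~~ (x <= y)%O by move: nc; rewrite /Order.comparable; case: (x <= y)%O.
have nyx : ~~ (y <= x)%O by move: nc; rewrite /Order.comparable; case: (y <= x)%O; rewrite ?orbT.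
have xy : x != y by apply: contraNneq nxy => ->; rewrite lexx.
have hxy : (x <= y)%O -> x = y by rewrite (negbTE nxy).
have hyx : (y <= x)%O -> y = x by rewrite (negbTE nyx).
have hxx : forall z : I, (z <= z)%O -> z = z by [].
split.
- move=> ind.
  pose XX := X K x y. pose Xx := X K x x. pose Xy := X K y y.
  have CXX : Ccoll XX by apply: CX.
  have CXx : Ccoll Xx by apply: CX.
  have CXy : Ccoll Xy by apply: CX.
  have nXx : XX <> Xx by apply: (@Xneq _ _ _ _ _ _ _ y); rewrite eqxx orbT orbb (eq_sym y x) (negbTE xy).
  have nXy : XX <> Xy by apply: (@Xneq _ _ _ _ _ _ _ x); rewrite eqxx /= orbb (negbTE xy).
  have nxxy : Xx <> Xy by apply: (@Xneq _ _ _ _ _ _ _ x); rewrite eqxx orbb (negbTE xy).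
  have [beta [_ uniq]] := ind [:: XX] (fun A hA => match hA with or_introl e => eq_ind _ _ CXX _ e | or_intror f => False_ind _ f end).
  pose beta1 := fun A => if excluded_middle_informative (A = XX) then 1%N else 0%N.
  pose beta2 := fun A => if excluded_middle_informative (A = Xx \/ A = Xy) then 1%N else 0%N.
  have b1X : beta1 XX = 1%N by rewrite /beta1; case: excluded_middle_informative.
  have b2X : beta2 XX = 0%N by rewrite /beta2; case: excluded_middle_informative => // [[]].
  have b2x : beta2 Xx = 1%N by rewrite /beta2; case: excluded_middle_informative => // h; exfalso; apply: h; left.
  have b2y : beta2 Xy = 1%N by rewrite /beta2; case: excluded_middle_informative => // h; exfalso; apply: h; right.
  have le1 : forall u, (rdim (dsum XX (zrep K I)) u <= 1)%N.
    by move=> u; rewrite /= addn0 leq_b1.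
  have entXX : forall u v i j, rmap (dsum XX (zrep K I)) u v i j = ((u <= v)%O)%:R.
    apply: dsum_ent; [exact: Xent | exact: zrep_ent | |].
    - by move=> u v _ /negP[].
    - by move=> u v /negP[].
  have dec1 : decomp (@Ccoll K d I) (sumseq [:: XX]) beta1.
    split; first by move=> A; rewrite /beta1; case: excluded_middle_informative => // e _; rewrite e.
    exists [:: XX]; split; first by constructor; [by [] | constructor].
    split; first by move=> A; rewrite /beta1; case: excluded_middle_informative => // e _; rewrite e; left.
    rewrite /= b1X /=.
    by apply: (iso_ent (r := fun u v => ((u <= v)%O)%:R)).
  have dec2 : decomp (@Ccoll K d I) (sumseq [:: XX]) beta2.
    split; first by move=> A; rewrite /beta2; case: excluded_middle_informative => // [[] e] _; rewrite e.
    exists [:: Xx; Xy]; split.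
      constructor; last by constructor; [by [] | constructor].
      by case => // e; apply: nxxy.
    split; first by move=> A; rewrite /beta2; case: excluded_middle_informative => // [[] e] _; rewrite e; [left|right;left].
    rewrite /= b2x b2y /=.
    apply: (iso_ent (r := fun u v => ((u <= v)%O)%:R)) => //.
    + move=> u; rewrite /= !memL !orbb !addn0.
      have : (u == x) && (u == y) = false.
        by case: (u =P x) => // ->; rewrite (negbTE xy).
      by case: (u == x); case: (u == y).
    + apply: dsum_ent; [exact: Xent | | |].
      * apply: dsum_ent; [exact: Xent | exact: zrep_ent | |].
        -- by move=> u v _ /negP[].
        -- by move=> u v /negP[].
      * move=> u v; rewrite /= !memL !orbb addn0.
        case: (u =P x) => // ->; case: (v =P y) => // -> _ _.
        by rewrite (negbTE nxy).
      * move=> u v; rewrite /= !memL !orbb addn0.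
        case: (u =P y) => // ->; case: (v =P x) => // -> _ _.
        by rewrite (negbTE nyx).
  have e1 := uniq beta1 dec1 XX CXX.
  have e2 := uniq beta2 dec2 XX CXX.
  by move: e1 e2; rewrite b1X b2X => ->.
- move=> th.
  have pa : [&& upset (Fxy x y), upset (Gxy x y) & Gxy x y \subset Fxy x y].
    by rewrite upF upG // subGF.
  pose a : Omega I := exist _ (Fxy x y, Gxy x y) pa.
  pose f : natT (Qobj K a) (Qobj K a) := fun u => \matrix_(i, j) ((u == x)%:R : K).
  have natf : is_nat f.
    move=> u v uv; apply/matrixP => i j.
    have hu : (u == x) || (u == y) by move: (leq_ltn_trans (leq0n _) (ltn_ord i)); rewrite /= memL; case: (_ || _).
    have hv : (v == x) || (v == y) by move: (leq_ltn_trans (leq0n _) (ltn_ord j)); rewrite /= memL; case: (_ || _).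
    have euv : u = v.
      move: uv; case/orP: hu => /eqP ->; case/orP: hv => /eqP -> //;
      by rewrite ?(negbTE nxy) ?(negbTE nyx).
    subst v; rewrite !mxE; apply: eq_bigr => k _; by rewrite !mxE mulrC.
  have := th a a f natf.
  rewrite /Omega_le !subxx /= => -[c hc].
  have hx : (0 < rdim (Qobj K a) x)%N by rewrite /= memL eqxx.
  have hy : (0 < rdim (Qobj K a) y)%N by rewrite /= memL eqxx orbT.
  move/matrixP: (hc x) => /(_ (Ordinal hx) (Ordinal hx)).
  move/matrixP: (hc y) => /(_ (Ordinal hy) (Ordinal hy)).
  rewrite /f /Qmor !mxE eqxx eq_sym (negbTE xy) mulr1 => <- /eqP.
  by rewrite oner_eq0.
Qed.
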